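(* Let $S=(0,1)$. Let $\{\lambda_n\}_{n\geq 1}$ be i.i.d. random variables, each uniformly distributed on $(3.87,4)$, and let $X_0$ be an $S$-valued random variable independent of the $\lambda_n$'s. Define the Markov process $X_{n+1}=\lambda_{n+1}X_n(1-X_n)$ for $n\geq 0$. Let $A_0=\left(1-\frac{1}{3.87},\,\frac34\right)$ and let $\phi$ be normalized Lebesgue measure on $A_0$, i.e. $\phi(B)=\mathrm{Leb}(B\cap A_0)/\mathrm{Leb}(A_0)$. Then $\{X_n\}_{n\geq 0}$ is $\phi$-irreducible: for every $x\in S$ and every Borel set $B\subset S$ with $\phi(B)>0$, there is $n\geq 1$ such that $p^n(x,B)=\mathrm{Prob}(X_n\in B\mid X_0=x)>0$.
   Context: $p^n(x,B)$ denotes the $n$-step transition probability $\mathrm{Prob}(X_n\in B\mid X_0=x)$ of the Markov chain. *)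

(* Defs.v *)
From HB Require Import structures.
From mathcomp Require Import all_boot all_order all_algebra.
From mathcomp Require Import all_classical all_reals all_analysis.
Set Implicit Arguments. Unset Strict Implicit. Unset Printing Implicit Defensive.
Import Order.TTheory GRing.Theory Num.Theory.
Local Open Scope classical_set_scope.
Local Open Scope ring_scope.

Definition lam_lo {R : realType} : R := 387%:R / 100%:R.
Definition S_space {R : realType} : set R := `]0, 1[%classic.
Definition lam_int {R : realType} : set R := `]lam_lo, 4%:R[%classic.
Definition logistic {R : realType} (l x : R) : R := l * x * (1 - x).

(* n-step transition probability p^n(x,B) of the chain X_{n+1} = l_{n+1} X_n (1 - X_n),
   l_n iid uniform on (3.87,4):
   p^0(x,B) = 1_B(x),
   p^{n+1}(x,B) = (1/0.13) * int_{(3.87,4)} p^n(l x (1-x), B) dl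
   (first-step / Chapman-Kolmogorov decomposition with the one-step kernel
    p(x,B) = Leb{l in (3.87,4) : l x (1-x) in B} / Leb((3.87,4))). *)
Fixpoint ptrans {R : realType} (n : nat) (x : R) (B : set R) : \bar R :=
  match n with
  | 0 => ((\1_B x : R))%:E
  | k.+1 => ((4%:R - lam_lo)^-1)%:E *
            (\int[@lebesgue_measure R]_(l in lam_int) ptrans k (logistic l x) B)%E
  end.

Definition A0 {R : realType} : set R := `]1 - lam_lo^-1, 3%:R / 4%:R[%classic.
Definition phi {R : realType} (B : set R) : \bar R :=
  (@lebesgue_measure R (B `&` A0) * ((fine (@lebesgue_measure R A0))^-1)%:E)%E.

(* Main.v *)
Require Import Defs.
From HB Require Import structures.
From mathcomp Require Import all_boot all_order all_algebra.
From mathcomp Require Import all_classical all_reals all_analysis.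
From mathcomp Require Import ring lra.
Import Order.TTheory GRing.Theory Num.Theory.
Local Open Scope classical_set_scope.
Local Open Scope ring_scope.
Import HBNNSimple.

Definition Good {R : realType} (B : set R) (k : nat) (x r : R) :=
  exists2 d : R, 0 < d & forall w, x - r < w -> w < x + r -> (d%:E <= ptrans k w B)%E.

Lemma ptrans_ge0 (R : realType) (B : set R) k x : (0 <= ptrans k x B)%E.
Proof.
elim: k x => [|k IH] x /=.
  by rewrite lee_fin indicE ler0n.
apply: mule_ge0; last by apply: integral_ge0 => l _; exact: IH.
rewrite lee_fin invr_ge0 /lam_lo; lra.
Qed.

Lemma prod_bnd (R : realType) (u G a b : R) : -a <= u -> u <= a -> -b <= G -> G <= b ->
  -(a*b) <= u*G /\ u*G <= a*b.
Proof. move=> *; split; nra. Qed.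

Lemma int_lb (R : realType) (D A : set R) (f : R -> \bar R) (dl : R) :
  measurable A -> A `<=` D -> 0 <= dl -> (forall x, D x -> (0 <= f x)%E) ->
  (forall x, A x -> (dl%:E <= f x)%E) ->
  (dl%:E * (@lebesgue_measure R A) <= \int[@lebesgue_measure R]_(x in D) f x)%E.
Proof.
move=> mA AD dl0 f0 fA.
rewrite ge0_integralE//.
have mA' : @measurable _ (measurableTypeR R) A by exact: mA.
pose h := scale_nnsfun (indic_nnsfun R mA') dl0.
have -> : (dl%:E * lebesgue_measure A)%E = sintegral lebesgue_measure h.
  rewrite /h /=. rewrite sintegralrM. rewrite /measurable_realfun.mindic sintegral_indic //.
apply: ereal_sup_ubound => /=; exists h => // x.
rewrite /h /= /measurable_realfun.mindic /patch.
case: (boolP (x \in A)) => xA.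
  rewrite indicE xA mulr1; have Dx : D x by apply: AD; apply/set_mem.
  by rewrite mem_set //; apply: fA; apply/set_mem.
rewrite indicE (negbTE xA) mulr0; case: ifP => // /set_mem Dx.
exact: f0.
Qed.

Lemma leb_scale (R : realType) (y : R) (y0 : 0 < y) (E : set R) : measurable E ->
  @lebesgue_measure R E = (y%:E * @lebesgue_measure R ((fun l => (l * y)%R) @^-1` E))%E.
Proof.
move=> mE.
pose yn := NngNum (ltW y0).
have mf : measurable_fun [set: measurableTypeR R] (fun l : measurableTypeR R => (l * y)%R : measurableTypeR R).
  exact: measurable_realfun.mulrr_measurable.
have := @lebesgue_measure_unique R (mscale yn (pushforward (@lebesgue_measure R) (fun l : measurableTypeR R => (l * y)%R : measurableTypeR R))).
move=> /(_ mf _ E mE) -> //.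
move=> _ [[a b]] _ <-.
change (lebesgue_measure `]a, b]%classic = (y%:E * lebesgue_measure ((fun l => (l * y)%R) @^-1` `]a, b]%classic))%E).
have -> : (fun l => (l * y)%R) @^-1` `]a, b]%classic = `](a / y), (b / y)]%classic.
  apply/seteqP; split => l /=; rewrite !in_itv /= ?ltr_pdivrMr ?ler_pdivlMr ?ltr_pdivlMr ?ler_pdivrMr //.
rewrite !lebesgue_measure_itv /= !lte_fin ltr_pM2r ?invr_gt0 //.
case: ifP => _; last by rewrite mule0.
rewrite -EFinD -EFinM; congr (_%:E); field; exact: lt0r_neq0.
Qed.


Lemma good_step (R : realType) (B : set R) k (x l' r : R) : 0 < x < 1 -> lam_lo < l' < 4%:R -> 0 < r ->
  Good B k (logistic l' x) r -> exists2 r', 0 < r' & Good B k.+1 x r'.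
Proof.
move=> /andP[x0 x1] /andP[l1 l2] r0 [d d0 Hd].
have ll : (lam_lo : R) = 387/100 by [].
rewrite ll in l1.
pose eta := Num.min (Num.min (l' - 387/100) (4%:R - l')) (r/8).
have eta0 : 0 < eta by rewrite /eta !lt_min; apply/andP; split; [apply/andP; split|]; lra.
have eta1 : eta <= l' - 387/100 by rewrite /eta !ge_min lexx.
have eta2 : eta <= 4%:R - l' by rewrite /eta !ge_min lexx orbT.
have eta3 : eta <= r/8 by rewrite /eta !ge_min lexx !orbT.
pose r' := Num.min 1 (r/16).
have r'0 : 0 < r' by rewrite /r' lt_min; apply/andP; split; lra.
have r'1 : r' <= 1 by rewrite /r' ge_min lexx.
have r'2 : r' <= r/16 by rewrite /r' ge_min lexx orbT.
exists r' => //.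
pose c : R := (4%:R - lam_lo)^-1.
have c0 : 0 < c by rewrite /c invr_gt0 ll; lra.
exists (c * (d * (2*eta))); first by apply: mulr_gt0 => //; apply: mulr_gt0 => //; lra.
move=> w hw1 hw2 /=.
have key : (d%:E * lebesgue_measure (`](l' - eta)%R, (l' + eta)%R[%classic : set R) <=
   \int[lebesgue_measure]_(l in lam_int) ptrans k (logistic l w) B)%E.
  apply: int_lb.
  - exact: measurable_itv.
  - move=> l /=; rewrite /lam_int /= !in_itv /= ll => /andP[h1 h2]; apply/andP; split; lra.
  - lra.
  - move=> l _; exact: ptrans_ge0.
  - move=> l /=; rewrite in_itv /= => /andP[h1 h2].
    have [hA hB] := @prod_bnd R (l - l') (w * (1 - w)) (r/8) 2 ltac:(lra) ltac:(lra) ltac:(nra) ltac:(nra).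
    have [hC hD] := @prod_bnd R (w - x) (1 - w - x) (r/16) 2 ltac:(lra) ltac:(lra) ltac:(lra) ltac:(lra).
    have [hE hF] := @prod_bnd R ((w - x) * (1 - w - x)) l' (r/8) 4 ltac:(nra) ltac:(nra) ltac:(lra) ltac:(lra).
    have E : logistic l w - logistic l' x = (l - l') * (w * (1 - w)) + ((w - x) * (1 - w - x)) * l'.
      by rewrite /logistic; ring.
    apply: Hd; lra.
rewrite lebesgue_measure_itv /= lte_fin ifT in key; last by lra.
rewrite [X in (_ <= X)%E]/= EFinM; apply: lee_wpmul2l; first by rewrite lee_fin; lra.
apply: le_trans key; rewrite -EFinM lee_fin; rewrite le_eqVlt; apply/orP; left; apply/eqP; ring.
Qed.

Lemma A0E' (R : realType) (x : R) : A0 x <-> 287/387 < x < 3/4.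
Proof.
rewrite /A0 /= in_itv /=.
have -> : 1 - (lam_lo : R)^-1 = 287/387 by rewrite /lam_lo; field.
by [].
Qed.

Lemma good_base (R : realType) (B : set R) (mB : measurable B) (mu : R) (mu0 : 0 < mu)
  (hmu : lebesgue_measure (B `&` A0) = mu%:E) (x : R) : A0 x -> exists2 r, 0 < r & Good B 1 x r.
Proof.
move=> /A0E' /andP[x1 x2].
pose r := Num.min (x - 287/387) (3/4 - x).
have r0 : 0 < r by rewrite /r lt_min; apply/andP; split; lra.
have r1 : r <= x - 287/387 by rewrite /r ge_min lexx.
have r2 : r <= 3/4 - x by rewrite /r ge_min lexx orbT.
exists r => //.
pose c : R := (4%:R - lam_lo)^-1.
have c0 : 0 < c by rewrite /c invr_gt0 /lam_lo; lra.
exists (c * mu); first exact: mulr_gt0.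
move=> w hw1 hw2 /=.
pose y := w * (1 - w).
have y0 : 0 < y by rewrite /y; apply: mulr_gt0; lra.
have y1 : y <= 1 by rewrite /y; nra.
have ylo : 387/100 * y < 287/387.
  have h : 0 < (w - 287/387) * (w + 287/387 - 1) by apply: mulr_gt0; lra.
  rewrite /y; nra.
have yhi : 3/4 < 4 * y.
  have h : 0 < (w - 287/387) * (3/4 - w) by apply: mulr_gt0; lra.
  rewrite /y; nra.
have mBA : measurable (B `&` A0) by apply: measurableI => //; exact: measurable_itv.
pose A := (fun l => (l * y)%R) @^-1` (B `&` A0).
have mA : measurable A.
  have := @measurable_realfun.mulrr_measurable R setT y measurableT _ mBA.
  by rewrite setTI.
have key : (1%:E * lebesgue_measure A <=
   \int[lebesgue_measure]_(l in lam_int) ptrans 0 (logistic l w) B)%E.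
  apply: int_lb => //.
  - move=> l [_ /A0E' /andP[h1 h2]]; rewrite /lam_int /= in_itv /= /lam_lo.
    apply/andP; split; nra.
  - move=> l _; exact: ptrans_ge0.
  - move=> l [hB _] /=; rewrite lee_fin indicE.
    have -> : logistic l w = l * y by rewrite /logistic /y mulrA.
    by rewrite mem_set.
rewrite mul1e in key.
have hs := @leb_scale R y y0 _ mBA.
rewrite hmu in hs.
rewrite EFinM; apply: lee_wpmul2l; first by rewrite lee_fin; lra.
apply: le_trans key.
rewrite hs -[X in (_ <= X)%E]mul1e; apply: lee_wpmul2r; first exact: measure_ge0.
by rewrite lee_fin.
Qed.

Lemma phi_pos (R : realType) (B : set R) : measurable B -> (0 < phi B)%E ->
  exists2 mu : R, 0 < mu & lebesgue_measure (B `&` A0) = mu%:E.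
Proof.
move=> mB hp.
have mA0 : measurable (A0 : set R) by exact: measurable_itv.
have hle := measureIr (@lebesgue_measure R) mB mA0.
have fin : (lebesgue_measure (A0 : set R) < +oo)%E.
  by rewrite /A0 lebesgue_measure_itv; case: ifP => _; rewrite ltry.
have hge : (0 <= lebesgue_measure (B `&` A0))%E by exact: measure_ge0.
have hle' : (lebesgue_measure (B `&` A0) <= lebesgue_measure A0)%E by exact: hle.
have fn : lebesgue_measure (B `&` A0) \is a fin_num.
  by rewrite ge0_fin_numE //; exact: le_lt_trans hle' fin.
have hne : lebesgue_measure (B `&` A0) != 0%E.
  apply/eqP => h0; move: hp; rewrite /phi h0 mul0e ltxx //.
exists (fine (lebesgue_measure (B `&` A0))); last by rewrite fineK.
apply: fine_gt0; rewrite lt_neqAle eq_sym hne hge /=.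
by rewrite -ge0_fin_numE.
Qed.

Section Dyn.
Variable R : realType.

Inductive Reach : R -> Prop :=
| ReachA : forall x, A0 x -> Reach x
| ReachS : forall x l, 0 < x < 1 -> lam_lo < l < 4%:R -> Reach (logistic l x) -> Reach x.

Lemma lam_loE : lam_lo = 387 / 100 :> R.
Proof. by []. Qed.

Lemma A0E (x : R) : A0 x <-> 287/387 < x < 3/4.
Proof.
rewrite /A0 /= in_itv /= lam_loE.
have -> : 1 - (387 / 100)^-1 = 287/387 :> R by field.
by [].
Qed.

Lemma reach_A0 (x : R) : ((7*100+41)*100+61)/((10*100)*100) < x -> x < ((7*100+49)*100+99)/((10*100)*100) -> Reach x.
Proof. move=> hx hx'; apply: ReachA; apply/A0E; apply/andP; split; lra. Qed.

Lemma reach_pre (a b x : R) : (forall w, a < w -> w < b -> Reach w) -> 0 < x -> x < 1 -> a < b ->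
  387/100 * (x*(1-x)) < b -> a < 4 * (x*(1-x)) -> Reach x.
Proof.
move=> H hx0 hx1 ab hb ha.
have hx : 0 < x < 1 by rewrite hx0 hx1.
have g0 : 0 < x * (1 - x) by apply: mulr_gt0; lra.
set g := x * (1 - x) in g0 hb ha.
pose lo := Num.max (387/100 * g) a.
pose hi := Num.min (4 * g) b.
have lohi : lo < hi.
  rewrite /lo /hi lt_min !gt_max; apply/andP; split; apply/andP; split; lra.
have hlo1 : 387/100 * g <= lo by rewrite /lo le_max lexx.
have hlo2 : a <= lo by rewrite /lo le_max lexx orbT.
have hhi1 : hi <= 4 * g by rewrite /hi ge_min lexx.
have hhi2 : hi <= b by rewrite /hi ge_min lexx orbT.
pose w := (lo + hi) / 2.
apply: (@ReachS x (w / g)) => //.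
  rewrite lam_loE; apply/andP; split.
  - by rewrite ltr_pdivlMr //; rewrite /w; lra.
  - by rewrite ltr_pdivrMr //; rewrite /w; lra.
have -> : logistic (w / g) x = w.
  rewrite /logistic -mulrA -/g mulrAC -mulrA divff ?mulr1 //; lra.
apply: H; rewrite /w; lra.
Qed.

Lemma reach_union (p1 q1 p2 q2 : R) :
  (forall w, p1 < w -> w < q1 -> Reach w) -> (forall w, p2 < w -> w < q2 -> Reach w) -> p2 < q1 ->
  forall w, p1 < w -> w < q2 -> Reach w.
Proof.
move=> H1 H2 h w hw hw'; case: (ltP w q1) => hw1.
  by apply: H1; lra.
by apply: H2; lra.
Qed.

Lemma glow (a P Q x : R) : P < x -> x < Q -> a <= 4 * (P*(1-P)) -> a <= 4*(Q*(1-Q)) -> a < 4*(x*(1-x)).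
Proof.
move=> hx hx' h1 h2.
have h : 0 < (x - P) * (Q - x) by apply: mulr_gt0; lra.
nra.
Qed.

Lemma gup_l (b P Q x : R) : P < x -> x < Q -> Q <= 1/2 -> 387/100 * (Q*(1-Q)) <= b -> 387/100 * (x*(1-x)) < b.
Proof.
move=> hx hx' hq h1.
have h : 0 < (Q - x) * (1 - Q - x) by apply: mulr_gt0; lra.
nra.
Qed.

Lemma gup_r (b P Q x : R) : P < x -> x < Q -> 1/2 <= P -> 387/100 * (P*(1-P)) <= b -> 387/100 * (x*(1-x)) < b.
Proof.
move=> hx hx' hq h1.
have h : 0 < (x - P) * (x + P - 1) by apply: mulr_gt0; lra.
nra.
Qed.

Lemma gup_m (b x : R) : 387/100 * (1/4) < b -> 387/100 * (x*(1-x)) < b.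
Proof.
move=> h1.
have h : 0 <= (x - 1/2) ^+ 2 by apply: sqr_ge0.
nra.
Qed.


Lemma n0 (x : R) : (((7*100+41)*100+61)/((10*100)*100)) < x -> x < (((7*100+49)*100+99)/((10*100)*100)) -> Reach x.
Proof.
move=> h1 h2; apply: reach_A0; lra.
Qed.

Lemma n1 (x : R) : (((2*100+45)*100+85)/((10*100)*100)) < x -> x < (((2*100+62)*100+91)/((10*100)*100)) -> Reach x.
Proof.
move=> h1 h2; apply: (@reach_pre (((7*100+41)*100+61)/((10*100)*100)) (((7*100+49)*100+99)/((10*100)*100)) _ (@n0)); [lra|lra|lra|apply: (@gup_l _ (((2*100+45)*100+85)/((10*100)*100)) (((2*100+62)*100+91)/((10*100)*100))) => //; lra|apply: (@glow _ (((2*100+45)*100+85)/((10*100)*100)) (((2*100+62)*100+91)/((10*100)*100))) => //; lra].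
Qed.

Lemma n2 (x : R) : (((7*100+37)*100+9)/((10*100)*100)) < x -> x < (((7*100+54)*100+15)/((10*100)*100)) -> Reach x.
Proof.
move=> h1 h2; apply: (@reach_pre (((7*100+41)*100+61)/((10*100)*100)) (((7*100+49)*100+99)/((10*100)*100)) _ (@n0)); [lra|lra|lra|apply: (@gup_r _ (((7*100+37)*100+9)/((10*100)*100)) (((7*100+54)*100+15)/((10*100)*100))) => //; lra|apply: (@glow _ (((7*100+37)*100+9)/((10*100)*100)) (((7*100+54)*100+15)/((10*100)*100))) => //; lra].
Qed.

Lemma n3 (x : R) : ((65*100+81)/((10*100)*100)) < x -> x < ((73*100+29)/((10*100)*100)) -> Reach x.
Proof.
move=> h1 h2; apply: (@reach_pre (((2*100+45)*100+85)/((10*100)*100)) (((2*100+62)*100+91)/((10*100)*100)) _ (@n1)); [lra|lra|lra|apply: (@gup_l _ ((65*100+81)/((10*100)*100)) ((73*100+29)/((10*100)*100))) => //; lra|apply: (@glow _ ((65*100+81)/((10*100)*100)) ((73*100+29)/((10*100)*100))) => //; lra].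
Qed.

Lemma n4 (x : R) : (((9*100+26)*100+71)/((10*100)*100)) < x -> x < (((9*100+34)*100+19)/((10*100)*100)) -> Reach x.
Proof.
move=> h1 h2; apply: (@reach_pre (((2*100+45)*100+85)/((10*100)*100)) (((2*100+62)*100+91)/((10*100)*100)) _ (@n1)); [lra|lra|lra|apply: (@gup_r _ (((9*100+26)*100+71)/((10*100)*100)) (((9*100+34)*100+19)/((10*100)*100))) => //; lra|apply: (@glow _ (((9*100+26)*100+71)/((10*100)*100)) (((9*100+34)*100+19)/((10*100)*100))) => //; lra].
Qed.

Lemma n5 (x : R) : (((2*100+43)*100+64)/((10*100)*100)) < x -> x < (((2*100+65)*100+19)/((10*100)*100)) -> Reach x.
Proof.
move=> h1 h2; apply: (@reach_pre (((7*100+37)*100+9)/((10*100)*100)) (((7*100+54)*100+15)/((10*100)*100)) _ (@n2)); [lra|lra|lra|apply: (@gup_l _ (((2*100+43)*100+64)/((10*100)*100)) (((2*100+65)*100+19)/((10*100)*100))) => //; lra|apply: (@glow _ (((2*100+43)*100+64)/((10*100)*100)) (((2*100+65)*100+19)/((10*100)*100))) => //; lra].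
Qed.

Lemma n6 (x : R) : (((7*100+34)*100+81)/((10*100)*100)) < x -> x < (((7*100+56)*100+36)/((10*100)*100)) -> Reach x.
Proof.
move=> h1 h2; apply: (@reach_pre (((7*100+37)*100+9)/((10*100)*100)) (((7*100+54)*100+15)/((10*100)*100)) _ (@n2)); [lra|lra|lra|apply: (@gup_r _ (((7*100+34)*100+81)/((10*100)*100)) (((7*100+56)*100+36)/((10*100)*100))) => //; lra|apply: (@glow _ (((7*100+34)*100+81)/((10*100)*100)) (((7*100+56)*100+36)/((10*100)*100))) => //; lra].
Qed.

Lemma n8 (x : R) : (((9*100+80)*100+70)/((10*100)*100)) < x -> x < (((9*100+83)*100+25)/((10*100)*100)) -> Reach x.
Proof.
move=> h1 h2; apply: (@reach_pre ((65*100+81)/((10*100)*100)) ((73*100+29)/((10*100)*100)) _ (@n3)); [lra|lra|lra|apply: (@gup_r _ (((9*100+80)*100+70)/((10*100)*100)) (((9*100+83)*100+25)/((10*100)*100))) => //; lra|apply: (@glow _ (((9*100+80)*100+70)/((10*100)*100)) (((9*100+83)*100+25)/((10*100)*100))) => //; lra].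
Qed.

Lemma n10 (x : R) : (((9*100+26)*100+1)/((10*100)*100)) < x -> x < (((9*100+34)*100+83)/((10*100)*100)) -> Reach x.
Proof.
move=> h1 h2; apply: (@reach_pre (((2*100+43)*100+64)/((10*100)*100)) (((2*100+65)*100+19)/((10*100)*100)) _ (@n5)); [lra|lra|lra|apply: (@gup_r _ (((9*100+26)*100+1)/((10*100)*100)) (((9*100+34)*100+83)/((10*100)*100))) => //; lra|apply: (@glow _ (((9*100+26)*100+1)/((10*100)*100)) (((9*100+34)*100+83)/((10*100)*100))) => //; lra].
Qed.

Lemma n11 (x : R) : (((2*100+42)*100+53)/((10*100)*100)) < x -> x < (((2*100+66)*100+41)/((10*100)*100)) -> Reach x.
Proof.
move=> h1 h2; apply: (@reach_pre (((7*100+34)*100+81)/((10*100)*100)) (((7*100+56)*100+36)/((10*100)*100)) _ (@n6)); [lra|lra|lra|apply: (@gup_l _ (((2*100+42)*100+53)/((10*100)*100)) (((2*100+66)*100+41)/((10*100)*100))) => //; lra|apply: (@glow _ (((2*100+42)*100+53)/((10*100)*100)) (((2*100+66)*100+41)/((10*100)*100))) => //; lra].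
Qed.

Lemma n12 (x : R) : (((7*100+33)*100+59)/((10*100)*100)) < x -> x < (((7*100+57)*100+47)/((10*100)*100)) -> Reach x.
Proof.
move=> h1 h2; apply: (@reach_pre (((7*100+34)*100+81)/((10*100)*100)) (((7*100+56)*100+36)/((10*100)*100)) _ (@n6)); [lra|lra|lra|apply: (@gup_r _ (((7*100+33)*100+59)/((10*100)*100)) (((7*100+57)*100+47)/((10*100)*100))) => //; lra|apply: (@glow _ (((7*100+33)*100+59)/((10*100)*100)) (((7*100+57)*100+47)/((10*100)*100))) => //; lra].
Qed.

Lemma n13 (x : R) : (((3*100+64)*100+65)/((10*100)*100)) < x -> x < (((4*100+7)*100+21)/((10*100)*100)) -> Reach x.
Proof.
move=> h1 h2; apply: (@reach_pre (((9*100+26)*100+71)/((10*100)*100)) (((9*100+34)*100+19)/((10*100)*100)) _ (@n4)); [lra|lra|lra|apply: (@gup_l _ (((3*100+64)*100+65)/((10*100)*100)) (((4*100+7)*100+21)/((10*100)*100))) => //; lra|apply: (@glow _ (((3*100+64)*100+65)/((10*100)*100)) (((4*100+7)*100+21)/((10*100)*100))) => //; lra].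
Qed.

Lemma n14 (x : R) : (((5*100+92)*100+79)/((10*100)*100)) < x -> x < (((6*100+35)*100+35)/((10*100)*100)) -> Reach x.
Proof.
move=> h1 h2; apply: (@reach_pre (((9*100+26)*100+71)/((10*100)*100)) (((9*100+34)*100+19)/((10*100)*100)) _ (@n4)); [lra|lra|lra|apply: (@gup_r _ (((5*100+92)*100+79)/((10*100)*100)) (((6*100+35)*100+35)/((10*100)*100))) => //; lra|apply: (@glow _ (((5*100+92)*100+79)/((10*100)*100)) (((6*100+35)*100+35)/((10*100)*100))) => //; lra].
Qed.

Lemma n20 (x : R) : (((9*100+25)*100+64)/((10*100)*100)) < x -> x < (((9*100+35)*100+15)/((10*100)*100)) -> Reach x.
Proof.
move=> h1 h2; apply: (@reach_pre (((2*100+42)*100+53)/((10*100)*100)) (((2*100+66)*100+41)/((10*100)*100)) _ (@n11)); [lra|lra|lra|apply: (@gup_r _ (((9*100+25)*100+64)/((10*100)*100)) (((9*100+35)*100+15)/((10*100)*100))) => //; lra|apply: (@glow _ (((9*100+25)*100+64)/((10*100)*100)) (((9*100+35)*100+15)/((10*100)*100))) => //; lra].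
Qed.

Lemma n21 (x : R) : (((1*100+1)*100+47)/((10*100)*100)) < x -> x < (((1*100+19)*100+49)/((10*100)*100)) -> Reach x.
Proof.
move=> h1 h2; apply: (@reach_pre (((3*100+64)*100+65)/((10*100)*100)) (((4*100+7)*100+21)/((10*100)*100)) _ (@n13)); [lra|lra|lra|apply: (@gup_l _ (((1*100+1)*100+47)/((10*100)*100)) (((1*100+19)*100+49)/((10*100)*100))) => //; lra|apply: (@glow _ (((1*100+1)*100+47)/((10*100)*100)) (((1*100+19)*100+49)/((10*100)*100))) => //; lra].
Qed.

Lemma n22 (x : R) : (((8*100+80)*100+51)/((10*100)*100)) < x -> x < (((8*100+98)*100+53)/((10*100)*100)) -> Reach x.
Proof.
move=> h1 h2; apply: (@reach_pre (((3*100+64)*100+65)/((10*100)*100)) (((4*100+7)*100+21)/((10*100)*100)) _ (@n13)); [lra|lra|lra|apply: (@gup_r _ (((8*100+80)*100+51)/((10*100)*100)) (((8*100+98)*100+53)/((10*100)*100))) => //; lra|apply: (@glow _ (((8*100+80)*100+51)/((10*100)*100)) (((8*100+98)*100+53)/((10*100)*100))) => //; lra].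
Qed.

Lemma n23 (x : R) : (((1*100+80)*100+95)/((10*100)*100)) < x -> x < (((2*100+7)*100+2)/((10*100)*100)) -> Reach x.
Proof.
move=> h1 h2; apply: (@reach_pre (((5*100+92)*100+79)/((10*100)*100)) (((6*100+35)*100+35)/((10*100)*100)) _ (@n14)); [lra|lra|lra|apply: (@gup_l _ (((1*100+80)*100+95)/((10*100)*100)) (((2*100+7)*100+2)/((10*100)*100))) => //; lra|apply: (@glow _ (((1*100+80)*100+95)/((10*100)*100)) (((2*100+7)*100+2)/((10*100)*100))) => //; lra].
Qed.

Lemma n24 (x : R) : (((7*100+92)*100+98)/((10*100)*100)) < x -> x < (((8*100+19)*100+5)/((10*100)*100)) -> Reach x.
Proof.
move=> h1 h2; apply: (@reach_pre (((5*100+92)*100+79)/((10*100)*100)) (((6*100+35)*100+35)/((10*100)*100)) _ (@n14)); [lra|lra|lra|apply: (@gup_r _ (((7*100+92)*100+98)/((10*100)*100)) (((8*100+19)*100+5)/((10*100)*100))) => //; lra|apply: (@glow _ (((7*100+92)*100+98)/((10*100)*100)) (((8*100+19)*100+5)/((10*100)*100))) => //; lra].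
Qed.

Lemma n25 (x : R) : (((2*100+41)*100+94)/((10*100)*100)) < x -> x < (((2*100+67)*100+2)/((10*100)*100)) -> Reach x.
Proof.
move=> h1 h2; apply: (@reach_pre (((7*100+33)*100+59)/((10*100)*100)) (((7*100+57)*100+47)/((10*100)*100)) _ (@n12)); [lra|lra|lra|apply: (@gup_l _ (((2*100+41)*100+94)/((10*100)*100)) (((2*100+67)*100+2)/((10*100)*100))) => //; lra|apply: (@glow _ (((2*100+41)*100+94)/((10*100)*100)) (((2*100+67)*100+2)/((10*100)*100))) => //; lra].
Qed.

Lemma n26 (x : R) : (((7*100+32)*100+98)/((10*100)*100)) < x -> x < (((7*100+58)*100+6)/((10*100)*100)) -> Reach x.
Proof.
move=> h1 h2; apply: (@reach_pre (((7*100+33)*100+59)/((10*100)*100)) (((7*100+57)*100+47)/((10*100)*100)) _ (@n12)); [lra|lra|lra|apply: (@gup_r _ (((7*100+32)*100+98)/((10*100)*100)) (((7*100+58)*100+6)/((10*100)*100))) => //; lra|apply: (@glow _ (((7*100+32)*100+98)/((10*100)*100)) (((7*100+58)*100+6)/((10*100)*100))) => //; lra].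
Qed.

Lemma n27 (x : R) : (((3*100+64)*100+1)/((10*100)*100)) < x -> x < (((4*100+8)*100+11)/((10*100)*100)) -> Reach x.
Proof.
move=> h1 h2; apply: (@reach_pre (((9*100+26)*100+1)/((10*100)*100)) (((9*100+34)*100+83)/((10*100)*100)) _ (@n10)); [lra|lra|lra|apply: (@gup_l _ (((3*100+64)*100+1)/((10*100)*100)) (((4*100+8)*100+11)/((10*100)*100))) => //; lra|apply: (@glow _ (((3*100+64)*100+1)/((10*100)*100)) (((4*100+8)*100+11)/((10*100)*100))) => //; lra].
Qed.

Lemma n28 (x : R) : (((5*100+91)*100+89)/((10*100)*100)) < x -> x < (((6*100+35)*100+99)/((10*100)*100)) -> Reach x.
Proof.
move=> h1 h2; apply: (@reach_pre (((9*100+26)*100+1)/((10*100)*100)) (((9*100+34)*100+83)/((10*100)*100)) _ (@n10)); [lra|lra|lra|apply: (@gup_r _ (((5*100+91)*100+89)/((10*100)*100)) (((6*100+35)*100+99)/((10*100)*100))) => //; lra|apply: (@glow _ (((5*100+91)*100+89)/((10*100)*100)) (((6*100+35)*100+99)/((10*100)*100))) => //; lra].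
Qed.

Lemma n29 (x : R) : (((4*100+30)*100+55)/((10*100)*100)) < x -> x < (((5*100+69)*100+45)/((10*100)*100)) -> Reach x.
Proof.
move=> h1 h2; apply: (@reach_pre (((9*100+80)*100+70)/((10*100)*100)) (((9*100+83)*100+25)/((10*100)*100)) _ (@n8)); [lra|lra|lra|apply: gup_m; lra|apply: (@glow _ (((4*100+30)*100+55)/((10*100)*100)) (((5*100+69)*100+45)/((10*100)*100))) => //; lra].
Qed.

Lemma n37 (x : R) : (((9*100+68)*100+12)/((10*100)*100)) < x -> x < (((9*100+73)*100+94)/((10*100)*100)) -> Reach x.
Proof.
move=> h1 h2; apply: (@reach_pre (((1*100+1)*100+47)/((10*100)*100)) (((1*100+19)*100+49)/((10*100)*100)) _ (@n21)); [lra|lra|lra|apply: (@gup_r _ (((9*100+68)*100+12)/((10*100)*100)) (((9*100+73)*100+94)/((10*100)*100))) => //; lra|apply: (@glow _ (((9*100+68)*100+12)/((10*100)*100)) (((9*100+73)*100+94)/((10*100)*100))) => //; lra].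
Qed.

Lemma n39 (x : R) : (((9*100+43)*100+31)/((10*100)*100)) < x -> x < (((9*100+52)*100+49)/((10*100)*100)) -> Reach x.
Proof.
move=> h1 h2; apply: (@reach_pre (((1*100+80)*100+95)/((10*100)*100)) (((2*100+7)*100+2)/((10*100)*100)) _ (@n23)); [lra|lra|lra|apply: (@gup_r _ (((9*100+43)*100+31)/((10*100)*100)) (((9*100+52)*100+49)/((10*100)*100))) => //; lra|apply: (@glow _ (((9*100+43)*100+31)/((10*100)*100)) (((9*100+52)*100+49)/((10*100)*100))) => //; lra].
Qed.

Lemma n41 (x : R) : (((9*100+25)*100+46)/((10*100)*100)) < x -> x < (((9*100+35)*100+32)/((10*100)*100)) -> Reach x.
Proof.
move=> h1 h2; apply: (@reach_pre (((2*100+41)*100+94)/((10*100)*100)) (((2*100+67)*100+2)/((10*100)*100)) _ (@n25)); [lra|lra|lra|apply: (@gup_r _ (((9*100+25)*100+46)/((10*100)*100)) (((9*100+35)*100+32)/((10*100)*100))) => //; lra|apply: (@glow _ (((9*100+25)*100+46)/((10*100)*100)) (((9*100+35)*100+32)/((10*100)*100))) => //; lra].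
Qed.

Lemma n42 (x : R) : (((1*100+1)*100+27)/((10*100)*100)) < x -> x < (((1*100+19)*100+79)/((10*100)*100)) -> Reach x.
Proof.
move=> h1 h2; apply: (@reach_pre (((3*100+64)*100+1)/((10*100)*100)) (((4*100+8)*100+11)/((10*100)*100)) _ (@n27)); [lra|lra|lra|apply: (@gup_l _ (((1*100+1)*100+27)/((10*100)*100)) (((1*100+19)*100+79)/((10*100)*100))) => //; lra|apply: (@glow _ (((1*100+1)*100+27)/((10*100)*100)) (((1*100+19)*100+79)/((10*100)*100))) => //; lra].
Qed.

Lemma n43 (x : R) : (((8*100+80)*100+21)/((10*100)*100)) < x -> x < (((8*100+98)*100+73)/((10*100)*100)) -> Reach x.
Proof.
move=> h1 h2; apply: (@reach_pre (((3*100+64)*100+1)/((10*100)*100)) (((4*100+8)*100+11)/((10*100)*100)) _ (@n27)); [lra|lra|lra|apply: (@gup_r _ (((8*100+80)*100+21)/((10*100)*100)) (((8*100+98)*100+73)/((10*100)*100))) => //; lra|apply: (@glow _ (((8*100+80)*100+21)/((10*100)*100)) (((8*100+98)*100+73)/((10*100)*100))) => //; lra].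
Qed.

Lemma n44 (x : R) : (((1*100+22)*100+71)/((10*100)*100)) < x -> x < (((1*100+79)*100+27)/((10*100)*100)) -> Reach x.
Proof.
move=> h1 h2; apply: (@reach_pre (((4*100+30)*100+55)/((10*100)*100)) (((5*100+69)*100+45)/((10*100)*100)) _ (@n29)); [lra|lra|lra|apply: (@gup_l _ (((1*100+22)*100+71)/((10*100)*100)) (((1*100+79)*100+27)/((10*100)*100))) => //; lra|apply: (@glow _ (((1*100+22)*100+71)/((10*100)*100)) (((1*100+79)*100+27)/((10*100)*100))) => //; lra].
Qed.

Lemma n45 (x : R) : (((8*100+20)*100+73)/((10*100)*100)) < x -> x < (((8*100+77)*100+29)/((10*100)*100)) -> Reach x.
Proof.
move=> h1 h2; apply: (@reach_pre (((4*100+30)*100+55)/((10*100)*100)) (((5*100+69)*100+45)/((10*100)*100)) _ (@n29)); [lra|lra|lra|apply: (@gup_r _ (((8*100+20)*100+73)/((10*100)*100)) (((8*100+77)*100+29)/((10*100)*100))) => //; lra|apply: (@glow _ (((8*100+20)*100+73)/((10*100)*100)) (((8*100+77)*100+29)/((10*100)*100))) => //; lra].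
Qed.

Lemma n46 (x : R) : (((1*100+80)*100+60)/((10*100)*100)) < x -> x < (((2*100+7)*100+31)/((10*100)*100)) -> Reach x.
Proof.
move=> h1 h2; apply: (@reach_pre (((5*100+91)*100+89)/((10*100)*100)) (((6*100+35)*100+99)/((10*100)*100)) _ (@n28)); [lra|lra|lra|apply: (@gup_l _ (((1*100+80)*100+60)/((10*100)*100)) (((2*100+7)*100+31)/((10*100)*100))) => //; lra|apply: (@glow _ (((1*100+80)*100+60)/((10*100)*100)) (((2*100+7)*100+31)/((10*100)*100))) => //; lra].
Qed.

Lemma n47 (x : R) : (((7*100+92)*100+69)/((10*100)*100)) < x -> x < (((8*100+19)*100+40)/((10*100)*100)) -> Reach x.
Proof.
move=> h1 h2; apply: (@reach_pre (((5*100+91)*100+89)/((10*100)*100)) (((6*100+35)*100+99)/((10*100)*100)) _ (@n28)); [lra|lra|lra|apply: (@gup_r _ (((7*100+92)*100+69)/((10*100)*100)) (((8*100+19)*100+40)/((10*100)*100))) => //; lra|apply: (@glow _ (((7*100+92)*100+69)/((10*100)*100)) (((8*100+19)*100+40)/((10*100)*100))) => //; lra].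
Qed.

Lemma n48 (x : R) : (((2*100+41)*100+65)/((10*100)*100)) < x -> x < (((2*100+67)*100+35)/((10*100)*100)) -> Reach x.
Proof.
move=> h1 h2; apply: (@reach_pre (((7*100+32)*100+98)/((10*100)*100)) (((7*100+58)*100+6)/((10*100)*100)) _ (@n26)); [lra|lra|lra|apply: (@gup_l _ (((2*100+41)*100+65)/((10*100)*100)) (((2*100+67)*100+35)/((10*100)*100))) => //; lra|apply: (@glow _ (((2*100+41)*100+65)/((10*100)*100)) (((2*100+67)*100+35)/((10*100)*100))) => //; lra].
Qed.

Lemma n49 (x : R) : (((7*100+32)*100+65)/((10*100)*100)) < x -> x < (((7*100+58)*100+35)/((10*100)*100)) -> Reach x.
Proof.
move=> h1 h2; apply: (@reach_pre (((7*100+32)*100+98)/((10*100)*100)) (((7*100+58)*100+6)/((10*100)*100)) _ (@n26)); [lra|lra|lra|apply: (@gup_r _ (((7*100+32)*100+65)/((10*100)*100)) (((7*100+58)*100+35)/((10*100)*100))) => //; lra|apply: (@glow _ (((7*100+32)*100+65)/((10*100)*100)) (((7*100+58)*100+35)/((10*100)*100))) => //; lra].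
Qed.

Lemma n50 (x : R) : (((2*100+72)*100+52)/((10*100)*100)) < x -> x < (((3*100+4)*100+13)/((10*100)*100)) -> Reach x.
Proof.
move=> h1 h2; apply: (@reach_pre (((7*100+92)*100+98)/((10*100)*100)) (((8*100+19)*100+5)/((10*100)*100)) _ (@n24)); [lra|lra|lra|apply: (@gup_l _ (((2*100+72)*100+52)/((10*100)*100)) (((3*100+4)*100+13)/((10*100)*100))) => //; lra|apply: (@glow _ (((2*100+72)*100+52)/((10*100)*100)) (((3*100+4)*100+13)/((10*100)*100))) => //; lra].
Qed.

Lemma n51 (x : R) : (((6*100+95)*100+87)/((10*100)*100)) < x -> x < (((7*100+27)*100+48)/((10*100)*100)) -> Reach x.
Proof.
move=> h1 h2; apply: (@reach_pre (((7*100+92)*100+98)/((10*100)*100)) (((8*100+19)*100+5)/((10*100)*100)) _ (@n24)); [lra|lra|lra|apply: (@gup_r _ (((6*100+95)*100+87)/((10*100)*100)) (((7*100+27)*100+48)/((10*100)*100))) => //; lra|apply: (@glow _ (((6*100+95)*100+87)/((10*100)*100)) (((7*100+27)*100+48)/((10*100)*100))) => //; lra].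
Qed.

Lemma n52 (x : R) : (((3*100+27)*100+18)/((10*100)*100)) < x -> x < (((3*100+66)*100+49)/((10*100)*100)) -> Reach x.
Proof.
move=> h1 h2; apply: (@reach_pre (((8*100+80)*100+51)/((10*100)*100)) (((8*100+98)*100+53)/((10*100)*100)) _ (@n22)); [lra|lra|lra|apply: (@gup_l _ (((3*100+27)*100+18)/((10*100)*100)) (((3*100+66)*100+49)/((10*100)*100))) => //; lra|apply: (@glow _ (((3*100+27)*100+18)/((10*100)*100)) (((3*100+66)*100+49)/((10*100)*100))) => //; lra].
Qed.

Lemma n53 (x : R) : (((6*100+33)*100+51)/((10*100)*100)) < x -> x < (((6*100+72)*100+82)/((10*100)*100)) -> Reach x.
Proof.
move=> h1 h2; apply: (@reach_pre (((8*100+80)*100+51)/((10*100)*100)) (((8*100+98)*100+53)/((10*100)*100)) _ (@n22)); [lra|lra|lra|apply: (@gup_r _ (((6*100+33)*100+51)/((10*100)*100)) (((6*100+72)*100+82)/((10*100)*100))) => //; lra|apply: (@glow _ (((6*100+33)*100+51)/((10*100)*100)) (((6*100+72)*100+82)/((10*100)*100))) => //; lra].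
Qed.

Lemma n54 (x : R) : (((3*100+63)*100+67)/((10*100)*100)) < x -> x < (((4*100+8)*100+56)/((10*100)*100)) -> Reach x.
Proof.
move=> h1 h2; apply: (@reach_pre (((9*100+25)*100+64)/((10*100)*100)) (((9*100+35)*100+15)/((10*100)*100)) _ (@n20)); [lra|lra|lra|apply: (@gup_l _ (((3*100+63)*100+67)/((10*100)*100)) (((4*100+8)*100+56)/((10*100)*100))) => //; lra|apply: (@glow _ (((3*100+63)*100+67)/((10*100)*100)) (((4*100+8)*100+56)/((10*100)*100))) => //; lra].
Qed.

Lemma n55 (x : R) : (((5*100+91)*100+44)/((10*100)*100)) < x -> x < (((6*100+36)*100+33)/((10*100)*100)) -> Reach x.
Proof.
move=> h1 h2; apply: (@reach_pre (((9*100+25)*100+64)/((10*100)*100)) (((9*100+35)*100+15)/((10*100)*100)) _ (@n20)); [lra|lra|lra|apply: (@gup_r _ (((5*100+91)*100+44)/((10*100)*100)) (((6*100+36)*100+33)/((10*100)*100))) => //; lra|apply: (@glow _ (((5*100+91)*100+44)/((10*100)*100)) (((6*100+36)*100+33)/((10*100)*100))) => //; lra].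
Qed.

Lemma n58 (x : R) : (((3*100+27)*100+18)/((10*100)*100)) < x -> x < (((4*100+8)*100+56)/((10*100)*100)) -> Reach x.
Proof.
move=> h1 h2.
have H0 := @n52.
have H1 := @reach_union (((3*100+27)*100+18)/((10*100)*100)) (((3*100+66)*100+49)/((10*100)*100)) (((3*100+63)*100+67)/((10*100)*100)) (((4*100+8)*100+56)/((10*100)*100)) H0 (@n54) ltac:(lra).
exact: H1.
Qed.

Lemma n59 (x : R) : (((5*100+91)*100+44)/((10*100)*100)) < x -> x < (((6*100+72)*100+82)/((10*100)*100)) -> Reach x.
Proof.
move=> h1 h2.
have H0 := @n55.
have H1 := @reach_union (((5*100+91)*100+44)/((10*100)*100)) (((6*100+36)*100+33)/((10*100)*100)) (((6*100+33)*100+51)/((10*100)*100)) (((6*100+72)*100+82)/((10*100)*100)) H0 (@n53) ltac:(lra).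
exact: H1.
Qed.

Lemma n72 (x : R) : ((26*100+1)/((10*100)*100)) < x -> x < ((31*100+96)/((10*100)*100)) -> Reach x.
Proof.
move=> h1 h2; apply: (@reach_pre (((1*100+1)*100+27)/((10*100)*100)) (((1*100+19)*100+79)/((10*100)*100)) _ (@n42)); [lra|lra|lra|apply: (@gup_l _ ((26*100+1)/((10*100)*100)) ((31*100+96)/((10*100)*100))) => //; lra|apply: (@glow _ ((26*100+1)/((10*100)*100)) ((31*100+96)/((10*100)*100))) => //; lra].
Qed.

Lemma n73 (x : R) : (((9*100+68)*100+4)/((10*100)*100)) < x -> x < (((9*100+73)*100+99)/((10*100)*100)) -> Reach x.
Proof.
move=> h1 h2; apply: (@reach_pre (((1*100+1)*100+27)/((10*100)*100)) (((1*100+19)*100+79)/((10*100)*100)) _ (@n42)); [lra|lra|lra|apply: (@gup_r _ (((9*100+68)*100+4)/((10*100)*100)) (((9*100+73)*100+99)/((10*100)*100))) => //; lra|apply: (@glow _ (((9*100+68)*100+4)/((10*100)*100)) (((9*100+73)*100+99)/((10*100)*100))) => //; lra].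
Qed.

Lemma n74 (x : R) : ((31*100+70)/((10*100)*100)) < x -> x < ((48*100+68)/((10*100)*100)) -> Reach x.
Proof.
move=> h1 h2; apply: (@reach_pre (((1*100+22)*100+71)/((10*100)*100)) (((1*100+79)*100+27)/((10*100)*100)) _ (@n44)); [lra|lra|lra|apply: (@gup_l _ ((31*100+70)/((10*100)*100)) ((48*100+68)/((10*100)*100))) => //; lra|apply: (@glow _ ((31*100+70)/((10*100)*100)) ((48*100+68)/((10*100)*100))) => //; lra].
Qed.

Lemma n75 (x : R) : (((9*100+51)*100+32)/((10*100)*100)) < x -> x < (((9*100+68)*100+30)/((10*100)*100)) -> Reach x.
Proof.
move=> h1 h2; apply: (@reach_pre (((1*100+22)*100+71)/((10*100)*100)) (((1*100+79)*100+27)/((10*100)*100)) _ (@n44)); [lra|lra|lra|apply: (@gup_r _ (((9*100+51)*100+32)/((10*100)*100)) (((9*100+68)*100+30)/((10*100)*100))) => //; lra|apply: (@glow _ (((9*100+51)*100+32)/((10*100)*100)) (((9*100+68)*100+30)/((10*100)*100))) => //; lra].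
Qed.

Lemma n76 (x : R) : ((47*100+41)/((10*100)*100)) < x -> x < ((56*100+78)/((10*100)*100)) -> Reach x.
Proof.
move=> h1 h2; apply: (@reach_pre (((1*100+80)*100+60)/((10*100)*100)) (((2*100+7)*100+31)/((10*100)*100)) _ (@n46)); [lra|lra|lra|apply: (@gup_l _ ((47*100+41)/((10*100)*100)) ((56*100+78)/((10*100)*100))) => //; lra|apply: (@glow _ ((47*100+41)/((10*100)*100)) ((56*100+78)/((10*100)*100))) => //; lra].
Qed.

Lemma n77 (x : R) : (((9*100+43)*100+22)/((10*100)*100)) < x -> x < (((9*100+52)*100+59)/((10*100)*100)) -> Reach x.
Proof.
move=> h1 h2; apply: (@reach_pre (((1*100+80)*100+60)/((10*100)*100)) (((2*100+7)*100+31)/((10*100)*100)) _ (@n46)); [lra|lra|lra|apply: (@gup_r _ (((9*100+43)*100+22)/((10*100)*100)) (((9*100+52)*100+59)/((10*100)*100))) => //; lra|apply: (@glow _ (((9*100+43)*100+22)/((10*100)*100)) (((9*100+52)*100+59)/((10*100)*100))) => //; lra].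
Qed.

Lemma n78 (x : R) : ((64*100+60)/((10*100)*100)) < x -> x < ((74*100+64)/((10*100)*100)) -> Reach x.
Proof.
move=> h1 h2; apply: (@reach_pre (((2*100+41)*100+65)/((10*100)*100)) (((2*100+67)*100+35)/((10*100)*100)) _ (@n48)); [lra|lra|lra|apply: (@gup_l _ ((64*100+60)/((10*100)*100)) ((74*100+64)/((10*100)*100))) => //; lra|apply: (@glow _ ((64*100+60)/((10*100)*100)) ((74*100+64)/((10*100)*100))) => //; lra].
Qed.

Lemma n79 (x : R) : (((9*100+25)*100+36)/((10*100)*100)) < x -> x < (((9*100+35)*100+40)/((10*100)*100)) -> Reach x.
Proof.
move=> h1 h2; apply: (@reach_pre (((2*100+41)*100+65)/((10*100)*100)) (((2*100+67)*100+35)/((10*100)*100)) _ (@n48)); [lra|lra|lra|apply: (@gup_r _ (((9*100+25)*100+36)/((10*100)*100)) (((9*100+35)*100+40)/((10*100)*100))) => //; lra|apply: (@glow _ (((9*100+25)*100+36)/((10*100)*100)) (((9*100+35)*100+40)/((10*100)*100))) => //; lra].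
Qed.

Lemma n80 (x : R) : ((73*100+55)/((10*100)*100)) < x -> x < ((85*100+96)/((10*100)*100)) -> Reach x.
Proof.
move=> h1 h2; apply: (@reach_pre (((2*100+72)*100+52)/((10*100)*100)) (((3*100+4)*100+13)/((10*100)*100)) _ (@n50)); [lra|lra|lra|apply: (@gup_l _ ((73*100+55)/((10*100)*100)) ((85*100+96)/((10*100)*100))) => //; lra|apply: (@glow _ ((73*100+55)/((10*100)*100)) ((85*100+96)/((10*100)*100))) => //; lra].
Qed.

Lemma n81 (x : R) : (((9*100+14)*100+4)/((10*100)*100)) < x -> x < (((9*100+26)*100+45)/((10*100)*100)) -> Reach x.
Proof.
move=> h1 h2; apply: (@reach_pre (((2*100+72)*100+52)/((10*100)*100)) (((3*100+4)*100+13)/((10*100)*100)) _ (@n50)); [lra|lra|lra|apply: (@gup_r _ (((9*100+14)*100+4)/((10*100)*100)) (((9*100+26)*100+45)/((10*100)*100))) => //; lra|apply: (@glow _ (((9*100+14)*100+4)/((10*100)*100)) (((9*100+26)*100+45)/((10*100)*100))) => //; lra].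
Qed.

Lemma n82 (x : R) : ((89*100+89)/((10*100)*100)) < x -> x < (((1*100+19)*100+95)/((10*100)*100)) -> Reach x.
Proof.
move=> h1 h2; apply: (@reach_pre (((3*100+27)*100+18)/((10*100)*100)) (((4*100+8)*100+56)/((10*100)*100)) _ (@n58)); [lra|lra|lra|apply: (@gup_l _ ((89*100+89)/((10*100)*100)) (((1*100+19)*100+95)/((10*100)*100))) => //; lra|apply: (@glow _ ((89*100+89)/((10*100)*100)) (((1*100+19)*100+95)/((10*100)*100))) => //; lra].
Qed.

Lemma n86 (x : R) : (((1*100+80)*100+42)/((10*100)*100)) < x -> x < (((2*100+24)*100+4)/((10*100)*100)) -> Reach x.
Proof.
move=> h1 h2; apply: (@reach_pre (((5*100+91)*100+44)/((10*100)*100)) (((6*100+72)*100+82)/((10*100)*100)) _ (@n59)); [lra|lra|lra|apply: (@gup_l _ (((1*100+80)*100+42)/((10*100)*100)) (((2*100+24)*100+4)/((10*100)*100))) => //; lra|apply: (@glow _ (((1*100+80)*100+42)/((10*100)*100)) (((2*100+24)*100+4)/((10*100)*100))) => //; lra].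
Qed.

Lemma n87 (x : R) : (((7*100+75)*100+96)/((10*100)*100)) < x -> x < (((8*100+19)*100+58)/((10*100)*100)) -> Reach x.
Proof.
move=> h1 h2; apply: (@reach_pre (((5*100+91)*100+44)/((10*100)*100)) (((6*100+72)*100+82)/((10*100)*100)) _ (@n59)); [lra|lra|lra|apply: (@gup_r _ (((7*100+75)*100+96)/((10*100)*100)) (((8*100+19)*100+58)/((10*100)*100))) => //; lra|apply: (@glow _ (((7*100+75)*100+96)/((10*100)*100)) (((8*100+19)*100+58)/((10*100)*100))) => //; lra].
Qed.

Lemma n88 (x : R) : (((2*100+24)*100+28)/((10*100)*100)) < x -> x < (((2*100+50)*100+95)/((10*100)*100)) -> Reach x.
Proof.
move=> h1 h2; apply: (@reach_pre (((6*100+95)*100+87)/((10*100)*100)) (((7*100+27)*100+48)/((10*100)*100)) _ (@n51)); [lra|lra|lra|apply: (@gup_l _ (((2*100+24)*100+28)/((10*100)*100)) (((2*100+50)*100+95)/((10*100)*100))) => //; lra|apply: (@glow _ (((2*100+24)*100+28)/((10*100)*100)) (((2*100+50)*100+95)/((10*100)*100))) => //; lra].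
Qed.

Lemma n89 (x : R) : (((7*100+49)*100+5)/((10*100)*100)) < x -> x < (((7*100+75)*100+72)/((10*100)*100)) -> Reach x.
Proof.
move=> h1 h2; apply: (@reach_pre (((6*100+95)*100+87)/((10*100)*100)) (((7*100+27)*100+48)/((10*100)*100)) _ (@n51)); [lra|lra|lra|apply: (@gup_r _ (((7*100+49)*100+5)/((10*100)*100)) (((7*100+75)*100+72)/((10*100)*100))) => //; lra|apply: (@glow _ (((7*100+49)*100+5)/((10*100)*100)) (((7*100+75)*100+72)/((10*100)*100))) => //; lra].
Qed.

Lemma n90 (x : R) : (((2*100+41)*100+49)/((10*100)*100)) < x -> x < (((2*100+67)*100+51)/((10*100)*100)) -> Reach x.
Proof.
move=> h1 h2; apply: (@reach_pre (((7*100+32)*100+65)/((10*100)*100)) (((7*100+58)*100+35)/((10*100)*100)) _ (@n49)); [lra|lra|lra|apply: (@gup_l _ (((2*100+41)*100+49)/((10*100)*100)) (((2*100+67)*100+51)/((10*100)*100))) => //; lra|apply: (@glow _ (((2*100+41)*100+49)/((10*100)*100)) (((2*100+67)*100+51)/((10*100)*100))) => //; lra].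
Qed.

Lemma n91 (x : R) : (((7*100+32)*100+49)/((10*100)*100)) < x -> x < (((7*100+58)*100+51)/((10*100)*100)) -> Reach x.
Proof.
move=> h1 h2; apply: (@reach_pre (((7*100+32)*100+65)/((10*100)*100)) (((7*100+58)*100+35)/((10*100)*100)) _ (@n49)); [lra|lra|lra|apply: (@gup_r _ (((7*100+32)*100+49)/((10*100)*100)) (((7*100+58)*100+51)/((10*100)*100))) => //; lra|apply: (@glow _ (((7*100+32)*100+49)/((10*100)*100)) (((7*100+58)*100+51)/((10*100)*100))) => //; lra].
Qed.

Lemma n92 (x : R) : (((2*100+72)*100+36)/((10*100)*100)) < x -> x < (((3*100+4)*100+36)/((10*100)*100)) -> Reach x.
Proof.
move=> h1 h2; apply: (@reach_pre (((7*100+92)*100+69)/((10*100)*100)) (((8*100+19)*100+40)/((10*100)*100)) _ (@n47)); [lra|lra|lra|apply: (@gup_l _ (((2*100+72)*100+36)/((10*100)*100)) (((3*100+4)*100+36)/((10*100)*100))) => //; lra|apply: (@glow _ (((2*100+72)*100+36)/((10*100)*100)) (((3*100+4)*100+36)/((10*100)*100))) => //; lra].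
Qed.

Lemma n93 (x : R) : (((6*100+95)*100+64)/((10*100)*100)) < x -> x < (((7*100+27)*100+64)/((10*100)*100)) -> Reach x.
Proof.
move=> h1 h2; apply: (@reach_pre (((7*100+92)*100+69)/((10*100)*100)) (((8*100+19)*100+40)/((10*100)*100)) _ (@n47)); [lra|lra|lra|apply: (@gup_r _ (((6*100+95)*100+64)/((10*100)*100)) (((7*100+27)*100+64)/((10*100)*100))) => //; lra|apply: (@glow _ (((6*100+95)*100+64)/((10*100)*100)) (((7*100+27)*100+64)/((10*100)*100))) => //; lra].
Qed.

Lemma n94 (x : R) : (((2*100+88)*100+31)/((10*100)*100)) < x -> x < (((3*100+47)*100+31)/((10*100)*100)) -> Reach x.
Proof.
move=> h1 h2; apply: (@reach_pre (((8*100+20)*100+73)/((10*100)*100)) (((8*100+77)*100+29)/((10*100)*100)) _ (@n45)); [lra|lra|lra|apply: (@gup_l _ (((2*100+88)*100+31)/((10*100)*100)) (((3*100+47)*100+31)/((10*100)*100))) => //; lra|apply: (@glow _ (((2*100+88)*100+31)/((10*100)*100)) (((3*100+47)*100+31)/((10*100)*100))) => //; lra].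
Qed.

Lemma n95 (x : R) : (((6*100+52)*100+69)/((10*100)*100)) < x -> x < (((7*100+11)*100+69)/((10*100)*100)) -> Reach x.
Proof.
move=> h1 h2; apply: (@reach_pre (((8*100+20)*100+73)/((10*100)*100)) (((8*100+77)*100+29)/((10*100)*100)) _ (@n45)); [lra|lra|lra|apply: (@gup_r _ (((6*100+52)*100+69)/((10*100)*100)) (((7*100+11)*100+69)/((10*100)*100))) => //; lra|apply: (@glow _ (((6*100+52)*100+69)/((10*100)*100)) (((7*100+11)*100+69)/((10*100)*100))) => //; lra].
Qed.

Lemma n96 (x : R) : (((3*100+26)*100+96)/((10*100)*100)) < x -> x < (((3*100+66)*100+68)/((10*100)*100)) -> Reach x.
Proof.
move=> h1 h2; apply: (@reach_pre (((8*100+80)*100+21)/((10*100)*100)) (((8*100+98)*100+73)/((10*100)*100)) _ (@n43)); [lra|lra|lra|apply: (@gup_l _ (((3*100+26)*100+96)/((10*100)*100)) (((3*100+66)*100+68)/((10*100)*100))) => //; lra|apply: (@glow _ (((3*100+26)*100+96)/((10*100)*100)) (((3*100+66)*100+68)/((10*100)*100))) => //; lra].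
Qed.

Lemma n97 (x : R) : (((6*100+33)*100+32)/((10*100)*100)) < x -> x < (((6*100+73)*100+4)/((10*100)*100)) -> Reach x.
Proof.
move=> h1 h2; apply: (@reach_pre (((8*100+80)*100+21)/((10*100)*100)) (((8*100+98)*100+73)/((10*100)*100)) _ (@n43)); [lra|lra|lra|apply: (@gup_r _ (((6*100+33)*100+32)/((10*100)*100)) (((6*100+73)*100+4)/((10*100)*100))) => //; lra|apply: (@glow _ (((6*100+33)*100+32)/((10*100)*100)) (((6*100+73)*100+4)/((10*100)*100))) => //; lra].
Qed.

Lemma n98 (x : R) : (((3*100+63)*100+50)/((10*100)*100)) < x -> x < (((4*100+8)*100+80)/((10*100)*100)) -> Reach x.
Proof.
move=> h1 h2; apply: (@reach_pre (((9*100+25)*100+46)/((10*100)*100)) (((9*100+35)*100+32)/((10*100)*100)) _ (@n41)); [lra|lra|lra|apply: (@gup_l _ (((3*100+63)*100+50)/((10*100)*100)) (((4*100+8)*100+80)/((10*100)*100))) => //; lra|apply: (@glow _ (((3*100+63)*100+50)/((10*100)*100)) (((4*100+8)*100+80)/((10*100)*100))) => //; lra].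
Qed.

Lemma n99 (x : R) : (((5*100+91)*100+20)/((10*100)*100)) < x -> x < (((6*100+36)*100+50)/((10*100)*100)) -> Reach x.
Proof.
move=> h1 h2; apply: (@reach_pre (((9*100+25)*100+46)/((10*100)*100)) (((9*100+35)*100+32)/((10*100)*100)) _ (@n41)); [lra|lra|lra|apply: (@gup_r _ (((5*100+91)*100+20)/((10*100)*100)) (((6*100+36)*100+50)/((10*100)*100))) => //; lra|apply: (@glow _ (((5*100+91)*100+20)/((10*100)*100)) (((6*100+36)*100+50)/((10*100)*100))) => //; lra].
Qed.

Lemma n100 (x : R) : (((3*100+80)*100+97)/((10*100)*100)) < x -> x < (((4*100+37)*100+71)/((10*100)*100)) -> Reach x.
Proof.
move=> h1 h2; apply: (@reach_pre (((9*100+43)*100+31)/((10*100)*100)) (((9*100+52)*100+49)/((10*100)*100)) _ (@n39)); [lra|lra|lra|apply: (@gup_l _ (((3*100+80)*100+97)/((10*100)*100)) (((4*100+37)*100+71)/((10*100)*100))) => //; lra|apply: (@glow _ (((3*100+80)*100+97)/((10*100)*100)) (((4*100+37)*100+71)/((10*100)*100))) => //; lra].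
Qed.

Lemma n101 (x : R) : (((5*100+62)*100+29)/((10*100)*100)) < x -> x < (((6*100+19)*100+3)/((10*100)*100)) -> Reach x.
Proof.
move=> h1 h2; apply: (@reach_pre (((9*100+43)*100+31)/((10*100)*100)) (((9*100+52)*100+49)/((10*100)*100)) _ (@n39)); [lra|lra|lra|apply: (@gup_r _ (((5*100+62)*100+29)/((10*100)*100)) (((6*100+19)*100+3)/((10*100)*100))) => //; lra|apply: (@glow _ (((5*100+62)*100+29)/((10*100)*100)) (((6*100+19)*100+3)/((10*100)*100))) => //; lra].
Qed.

Lemma n102 (x : R) : (((4*100+10)*100+74)/((10*100)*100)) < x -> x < (((5*100+89)*100+26)/((10*100)*100)) -> Reach x.
Proof.
move=> h1 h2; apply: (@reach_pre (((9*100+68)*100+12)/((10*100)*100)) (((9*100+73)*100+94)/((10*100)*100)) _ (@n37)); [lra|lra|lra|apply: gup_m; lra|apply: (@glow _ (((4*100+10)*100+74)/((10*100)*100)) (((5*100+89)*100+26)/((10*100)*100))) => //; lra].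
Qed.

Lemma n106 (x : R) : ((26*100+1)/((10*100)*100)) < x -> x < ((56*100+78)/((10*100)*100)) -> Reach x.
Proof.
move=> h1 h2.
have H0 := @n72.
have H1 := @reach_union ((26*100+1)/((10*100)*100)) ((31*100+96)/((10*100)*100)) ((31*100+70)/((10*100)*100)) ((48*100+68)/((10*100)*100)) H0 (@n74) ltac:(lra).
have H2 := @reach_union ((26*100+1)/((10*100)*100)) ((48*100+68)/((10*100)*100)) ((47*100+41)/((10*100)*100)) ((56*100+78)/((10*100)*100)) H1 (@n76) ltac:(lra).
exact: H2.
Qed.

Lemma n107 (x : R) : ((64*100+60)/((10*100)*100)) < x -> x < ((85*100+96)/((10*100)*100)) -> Reach x.
Proof.
move=> h1 h2.
have H0 := @n78.
have H1 := @reach_union ((64*100+60)/((10*100)*100)) ((74*100+64)/((10*100)*100)) ((73*100+55)/((10*100)*100)) ((85*100+96)/((10*100)*100)) H0 (@n80) ltac:(lra).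
exact: H1.
Qed.

Lemma n108 (x : R) : (((2*100+24)*100+28)/((10*100)*100)) < x -> x < (((2*100+67)*100+51)/((10*100)*100)) -> Reach x.
Proof.
move=> h1 h2.
have H0 := @n88.
have H1 := @reach_union (((2*100+24)*100+28)/((10*100)*100)) (((2*100+50)*100+95)/((10*100)*100)) (((2*100+41)*100+49)/((10*100)*100)) (((2*100+67)*100+51)/((10*100)*100)) H0 (@n90) ltac:(lra).
exact: H1.
Qed.

Lemma n109 (x : R) : (((2*100+72)*100+36)/((10*100)*100)) < x -> x < (((7*100+27)*100+64)/((10*100)*100)) -> Reach x.
Proof.
move=> h1 h2.
have H0 := @n92.
have H1 := @reach_union (((2*100+72)*100+36)/((10*100)*100)) (((3*100+4)*100+36)/((10*100)*100)) (((2*100+88)*100+31)/((10*100)*100)) (((3*100+47)*100+31)/((10*100)*100)) H0 (@n94) ltac:(lra).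
have H2 := @reach_union (((2*100+72)*100+36)/((10*100)*100)) (((3*100+47)*100+31)/((10*100)*100)) (((3*100+26)*100+96)/((10*100)*100)) (((3*100+66)*100+68)/((10*100)*100)) H1 (@n96) ltac:(lra).
have H3 := @reach_union (((2*100+72)*100+36)/((10*100)*100)) (((3*100+66)*100+68)/((10*100)*100)) (((3*100+27)*100+18)/((10*100)*100)) (((4*100+8)*100+56)/((10*100)*100)) H2 (@n58) ltac:(lra).
have H4 := @reach_union (((2*100+72)*100+36)/((10*100)*100)) (((4*100+8)*100+56)/((10*100)*100)) (((3*100+63)*100+50)/((10*100)*100)) (((4*100+8)*100+80)/((10*100)*100)) H3 (@n98) ltac:(lra).
have H5 := @reach_union (((2*100+72)*100+36)/((10*100)*100)) (((4*100+8)*100+80)/((10*100)*100)) (((3*100+80)*100+97)/((10*100)*100)) (((4*100+37)*100+71)/((10*100)*100)) H4 (@n100) ltac:(lra).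
have H6 := @reach_union (((2*100+72)*100+36)/((10*100)*100)) (((4*100+37)*100+71)/((10*100)*100)) (((4*100+10)*100+74)/((10*100)*100)) (((5*100+89)*100+26)/((10*100)*100)) H5 (@n102) ltac:(lra).
have H7 := @reach_union (((2*100+72)*100+36)/((10*100)*100)) (((5*100+89)*100+26)/((10*100)*100)) (((5*100+62)*100+29)/((10*100)*100)) (((6*100+19)*100+3)/((10*100)*100)) H6 (@n101) ltac:(lra).
have H8 := @reach_union (((2*100+72)*100+36)/((10*100)*100)) (((6*100+19)*100+3)/((10*100)*100)) (((5*100+91)*100+20)/((10*100)*100)) (((6*100+36)*100+50)/((10*100)*100)) H7 (@n99) ltac:(lra).
have H9 := @reach_union (((2*100+72)*100+36)/((10*100)*100)) (((6*100+36)*100+50)/((10*100)*100)) (((5*100+91)*100+44)/((10*100)*100)) (((6*100+72)*100+82)/((10*100)*100)) H8 (@n59) ltac:(lra).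
have H10 := @reach_union (((2*100+72)*100+36)/((10*100)*100)) (((6*100+72)*100+82)/((10*100)*100)) (((6*100+33)*100+32)/((10*100)*100)) (((6*100+73)*100+4)/((10*100)*100)) H9 (@n97) ltac:(lra).
have H11 := @reach_union (((2*100+72)*100+36)/((10*100)*100)) (((6*100+73)*100+4)/((10*100)*100)) (((6*100+52)*100+69)/((10*100)*100)) (((7*100+11)*100+69)/((10*100)*100)) H10 (@n95) ltac:(lra).
have H12 := @reach_union (((2*100+72)*100+36)/((10*100)*100)) (((7*100+11)*100+69)/((10*100)*100)) (((6*100+95)*100+64)/((10*100)*100)) (((7*100+27)*100+64)/((10*100)*100)) H11 (@n93) ltac:(lra).
exact: H12.
Qed.

Lemma n110 (x : R) : (((7*100+32)*100+49)/((10*100)*100)) < x -> x < (((7*100+75)*100+72)/((10*100)*100)) -> Reach x.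
Proof.
move=> h1 h2.
have H0 := @n91.
have H1 := @reach_union (((7*100+32)*100+49)/((10*100)*100)) (((7*100+58)*100+51)/((10*100)*100)) (((7*100+49)*100+5)/((10*100)*100)) (((7*100+75)*100+72)/((10*100)*100)) H0 (@n89) ltac:(lra).
exact: H1.
Qed.

Lemma n111 (x : R) : (((9*100+14)*100+4)/((10*100)*100)) < x -> x < (((9*100+35)*100+40)/((10*100)*100)) -> Reach x.
Proof.
move=> h1 h2.
have H0 := @n81.
have H1 := @reach_union (((9*100+14)*100+4)/((10*100)*100)) (((9*100+26)*100+45)/((10*100)*100)) (((9*100+25)*100+36)/((10*100)*100)) (((9*100+35)*100+40)/((10*100)*100)) H0 (@n79) ltac:(lra).
exact: H1.
Qed.

Lemma n112 (x : R) : (((9*100+43)*100+22)/((10*100)*100)) < x -> x < (((9*100+73)*100+99)/((10*100)*100)) -> Reach x.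
Proof.
move=> h1 h2.
have H0 := @n77.
have H1 := @reach_union (((9*100+43)*100+22)/((10*100)*100)) (((9*100+52)*100+59)/((10*100)*100)) (((9*100+51)*100+32)/((10*100)*100)) (((9*100+68)*100+30)/((10*100)*100)) H0 (@n75) ltac:(lra).
have H2 := @reach_union (((9*100+43)*100+22)/((10*100)*100)) (((9*100+68)*100+30)/((10*100)*100)) (((9*100+68)*100+4)/((10*100)*100)) (((9*100+73)*100+99)/((10*100)*100)) H1 (@n73) ltac:(lra).
exact: H2.
Qed.

Lemma n127 (x : R) : ((23*100+2)/((10*100)*100)) < x -> x < ((32*100+1)/((10*100)*100)) -> Reach x.
Proof.
move=> h1 h2; apply: (@reach_pre ((89*100+89)/((10*100)*100)) (((1*100+19)*100+95)/((10*100)*100)) _ (@n82)); [lra|lra|lra|apply: (@gup_l _ ((23*100+2)/((10*100)*100)) ((32*100+1)/((10*100)*100))) => //; lra|apply: (@glow _ ((23*100+2)/((10*100)*100)) ((32*100+1)/((10*100)*100))) => //; lra].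
Qed.

Lemma n128 (x : R) : (((9*100+67)*100+99)/((10*100)*100)) < x -> x < (((9*100+76)*100+98)/((10*100)*100)) -> Reach x.
Proof.
move=> h1 h2; apply: (@reach_pre ((89*100+89)/((10*100)*100)) (((1*100+19)*100+95)/((10*100)*100)) _ (@n82)); [lra|lra|lra|apply: (@gup_r _ (((9*100+67)*100+99)/((10*100)*100)) (((9*100+76)*100+98)/((10*100)*100))) => //; lra|apply: (@glow _ (((9*100+67)*100+99)/((10*100)*100)) (((9*100+76)*100+98)/((10*100)*100))) => //; lra].
Qed.

Lemma n131 (x : R) : ((47*100+36)/((10*100)*100)) < x -> x < ((61*100+68)/((10*100)*100)) -> Reach x.
Proof.
move=> h1 h2; apply: (@reach_pre (((1*100+80)*100+42)/((10*100)*100)) (((2*100+24)*100+4)/((10*100)*100)) _ (@n86)); [lra|lra|lra|apply: (@gup_l _ ((47*100+36)/((10*100)*100)) ((61*100+68)/((10*100)*100))) => //; lra|apply: (@glow _ ((47*100+36)/((10*100)*100)) ((61*100+68)/((10*100)*100))) => //; lra].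
Qed.

Lemma n132 (x : R) : (((9*100+38)*100+32)/((10*100)*100)) < x -> x < (((9*100+52)*100+64)/((10*100)*100)) -> Reach x.
Proof.
move=> h1 h2; apply: (@reach_pre (((1*100+80)*100+42)/((10*100)*100)) (((2*100+24)*100+4)/((10*100)*100)) _ (@n86)); [lra|lra|lra|apply: (@gup_r _ (((9*100+38)*100+32)/((10*100)*100)) (((9*100+52)*100+64)/((10*100)*100))) => //; lra|apply: (@glow _ (((9*100+38)*100+32)/((10*100)*100)) (((9*100+52)*100+64)/((10*100)*100))) => //; lra].
Qed.

Lemma n133 (x : R) : ((59*100+64)/((10*100)*100)) < x -> x < ((74*100+69)/((10*100)*100)) -> Reach x.
Proof.
move=> h1 h2; apply: (@reach_pre (((2*100+24)*100+28)/((10*100)*100)) (((2*100+67)*100+51)/((10*100)*100)) _ (@n108)); [lra|lra|lra|apply: (@gup_l _ ((59*100+64)/((10*100)*100)) ((74*100+69)/((10*100)*100))) => //; lra|apply: (@glow _ ((59*100+64)/((10*100)*100)) ((74*100+69)/((10*100)*100))) => //; lra].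
Qed.

Lemma n134 (x : R) : (((9*100+25)*100+31)/((10*100)*100)) < x -> x < (((9*100+40)*100+36)/((10*100)*100)) -> Reach x.
Proof.
move=> h1 h2; apply: (@reach_pre (((2*100+24)*100+28)/((10*100)*100)) (((2*100+67)*100+51)/((10*100)*100)) _ (@n108)); [lra|lra|lra|apply: (@gup_r _ (((9*100+25)*100+31)/((10*100)*100)) (((9*100+40)*100+36)/((10*100)*100))) => //; lra|apply: (@glow _ (((9*100+25)*100+31)/((10*100)*100)) (((9*100+40)*100+36)/((10*100)*100))) => //; lra].
Qed.

Lemma n135 (x : R) : ((73*100+51)/((10*100)*100)) < x -> x < (((2*100+51)*100+3)/((10*100)*100)) -> Reach x.
Proof.
move=> h1 h2; apply: (@reach_pre (((2*100+72)*100+36)/((10*100)*100)) (((7*100+27)*100+64)/((10*100)*100)) _ (@n109)); [lra|lra|lra|apply: (@gup_l _ ((73*100+51)/((10*100)*100)) (((2*100+51)*100+3)/((10*100)*100))) => //; lra|apply: (@glow _ ((73*100+51)/((10*100)*100)) (((2*100+51)*100+3)/((10*100)*100))) => //; lra].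
Qed.

Lemma n136 (x : R) : (((7*100+48)*100+97)/((10*100)*100)) < x -> x < (((9*100+26)*100+49)/((10*100)*100)) -> Reach x.
Proof.
move=> h1 h2; apply: (@reach_pre (((2*100+72)*100+36)/((10*100)*100)) (((7*100+27)*100+64)/((10*100)*100)) _ (@n109)); [lra|lra|lra|apply: (@gup_r _ (((7*100+48)*100+97)/((10*100)*100)) (((9*100+26)*100+49)/((10*100)*100))) => //; lra|apply: (@glow _ (((7*100+48)*100+97)/((10*100)*100)) (((9*100+26)*100+49)/((10*100)*100))) => //; lra].
Qed.

Lemma n137 (x : R) : (((2*100+41)*100+41)/((10*100)*100)) < x -> x < (((2*100+77)*100+37)/((10*100)*100)) -> Reach x.
Proof.
move=> h1 h2; apply: (@reach_pre (((7*100+32)*100+49)/((10*100)*100)) (((7*100+75)*100+72)/((10*100)*100)) _ (@n110)); [lra|lra|lra|apply: (@gup_l _ (((2*100+41)*100+41)/((10*100)*100)) (((2*100+77)*100+37)/((10*100)*100))) => //; lra|apply: (@glow _ (((2*100+41)*100+41)/((10*100)*100)) (((2*100+77)*100+37)/((10*100)*100))) => //; lra].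
Qed.

Lemma n138 (x : R) : (((7*100+22)*100+63)/((10*100)*100)) < x -> x < (((7*100+58)*100+59)/((10*100)*100)) -> Reach x.
Proof.
move=> h1 h2; apply: (@reach_pre (((7*100+32)*100+49)/((10*100)*100)) (((7*100+75)*100+72)/((10*100)*100)) _ (@n110)); [lra|lra|lra|apply: (@gup_r _ (((7*100+22)*100+63)/((10*100)*100)) (((7*100+58)*100+59)/((10*100)*100))) => //; lra|apply: (@glow _ (((7*100+22)*100+63)/((10*100)*100)) (((7*100+58)*100+59)/((10*100)*100))) => //; lra].
Qed.

Lemma n139 (x : R) : (((2*100+63)*100+35)/((10*100)*100)) < x -> x < (((3*100+4)*100+48)/((10*100)*100)) -> Reach x.
Proof.
move=> h1 h2; apply: (@reach_pre (((7*100+75)*100+96)/((10*100)*100)) (((8*100+19)*100+58)/((10*100)*100)) _ (@n87)); [lra|lra|lra|apply: (@gup_l _ (((2*100+63)*100+35)/((10*100)*100)) (((3*100+4)*100+48)/((10*100)*100))) => //; lra|apply: (@glow _ (((2*100+63)*100+35)/((10*100)*100)) (((3*100+4)*100+48)/((10*100)*100))) => //; lra].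
Qed.

Lemma n140 (x : R) : (((6*100+95)*100+52)/((10*100)*100)) < x -> x < (((7*100+36)*100+65)/((10*100)*100)) -> Reach x.
Proof.
move=> h1 h2; apply: (@reach_pre (((7*100+75)*100+96)/((10*100)*100)) (((8*100+19)*100+58)/((10*100)*100)) _ (@n87)); [lra|lra|lra|apply: (@gup_r _ (((6*100+95)*100+52)/((10*100)*100)) (((7*100+36)*100+65)/((10*100)*100))) => //; lra|apply: (@glow _ (((6*100+95)*100+52)/((10*100)*100)) (((7*100+36)*100+65)/((10*100)*100))) => //; lra].
Qed.

Lemma n155 (x : R) : ((23*100+2)/((10*100)*100)) < x -> x < (((9*100+76)*100+98)/((10*100)*100)) -> Reach x.
Proof.
move=> h1 h2.
have H0 := @n127.
have H1 := @reach_union ((23*100+2)/((10*100)*100)) ((32*100+1)/((10*100)*100)) ((26*100+1)/((10*100)*100)) ((56*100+78)/((10*100)*100)) H0 (@n106) ltac:(lra).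
have H2 := @reach_union ((23*100+2)/((10*100)*100)) ((56*100+78)/((10*100)*100)) ((47*100+36)/((10*100)*100)) ((61*100+68)/((10*100)*100)) H1 (@n131) ltac:(lra).
have H3 := @reach_union ((23*100+2)/((10*100)*100)) ((61*100+68)/((10*100)*100)) ((59*100+64)/((10*100)*100)) ((74*100+69)/((10*100)*100)) H2 (@n133) ltac:(lra).
have H4 := @reach_union ((23*100+2)/((10*100)*100)) ((74*100+69)/((10*100)*100)) ((64*100+60)/((10*100)*100)) ((85*100+96)/((10*100)*100)) H3 (@n107) ltac:(lra).
have H5 := @reach_union ((23*100+2)/((10*100)*100)) ((85*100+96)/((10*100)*100)) ((73*100+51)/((10*100)*100)) (((2*100+51)*100+3)/((10*100)*100)) H4 (@n135) ltac:(lra).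
have H6 := @reach_union ((23*100+2)/((10*100)*100)) (((2*100+51)*100+3)/((10*100)*100)) (((2*100+24)*100+28)/((10*100)*100)) (((2*100+67)*100+51)/((10*100)*100)) H5 (@n108) ltac:(lra).
have H7 := @reach_union ((23*100+2)/((10*100)*100)) (((2*100+67)*100+51)/((10*100)*100)) (((2*100+41)*100+41)/((10*100)*100)) (((2*100+77)*100+37)/((10*100)*100)) H6 (@n137) ltac:(lra).
have H8 := @reach_union ((23*100+2)/((10*100)*100)) (((2*100+77)*100+37)/((10*100)*100)) (((2*100+63)*100+35)/((10*100)*100)) (((3*100+4)*100+48)/((10*100)*100)) H7 (@n139) ltac:(lra).
have H9 := @reach_union ((23*100+2)/((10*100)*100)) (((3*100+4)*100+48)/((10*100)*100)) (((2*100+72)*100+36)/((10*100)*100)) (((7*100+27)*100+64)/((10*100)*100)) H8 (@n109) ltac:(lra).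
have H10 := @reach_union ((23*100+2)/((10*100)*100)) (((7*100+27)*100+64)/((10*100)*100)) (((6*100+95)*100+52)/((10*100)*100)) (((7*100+36)*100+65)/((10*100)*100)) H9 (@n140) ltac:(lra).
have H11 := @reach_union ((23*100+2)/((10*100)*100)) (((7*100+36)*100+65)/((10*100)*100)) (((7*100+22)*100+63)/((10*100)*100)) (((7*100+58)*100+59)/((10*100)*100)) H10 (@n138) ltac:(lra).
have H12 := @reach_union ((23*100+2)/((10*100)*100)) (((7*100+58)*100+59)/((10*100)*100)) (((7*100+32)*100+49)/((10*100)*100)) (((7*100+75)*100+72)/((10*100)*100)) H11 (@n110) ltac:(lra).
have H13 := @reach_union ((23*100+2)/((10*100)*100)) (((7*100+75)*100+72)/((10*100)*100)) (((7*100+48)*100+97)/((10*100)*100)) (((9*100+26)*100+49)/((10*100)*100)) H12 (@n136) ltac:(lra).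
have H14 := @reach_union ((23*100+2)/((10*100)*100)) (((9*100+26)*100+49)/((10*100)*100)) (((9*100+14)*100+4)/((10*100)*100)) (((9*100+35)*100+40)/((10*100)*100)) H13 (@n111) ltac:(lra).
have H15 := @reach_union ((23*100+2)/((10*100)*100)) (((9*100+35)*100+40)/((10*100)*100)) (((9*100+25)*100+31)/((10*100)*100)) (((9*100+40)*100+36)/((10*100)*100)) H14 (@n134) ltac:(lra).
have H16 := @reach_union ((23*100+2)/((10*100)*100)) (((9*100+40)*100+36)/((10*100)*100)) (((9*100+38)*100+32)/((10*100)*100)) (((9*100+52)*100+64)/((10*100)*100)) H15 (@n132) ltac:(lra).
have H17 := @reach_union ((23*100+2)/((10*100)*100)) (((9*100+52)*100+64)/((10*100)*100)) (((9*100+43)*100+22)/((10*100)*100)) (((9*100+73)*100+99)/((10*100)*100)) H16 (@n112) ltac:(lra).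
have H18 := @reach_union ((23*100+2)/((10*100)*100)) (((9*100+73)*100+99)/((10*100)*100)) (((9*100+67)*100+99)/((10*100)*100)) (((9*100+76)*100+98)/((10*100)*100)) H17 (@n128) ltac:(lra).
exact: H18.
Qed.

Lemma mid (x : R) : 1/10 <= x -> x <= 9/10 -> Reach x.
Proof. move=> h1 h2; apply: n155; lra. Qed.

Lemma small_n (n : nat) (x : R) : 1 <= 10 * x * 2 ^+ n -> x <= 9/10 -> Reach x.
Proof.
elim: n x => [|n IH] x h1 h2.
  by apply: mid => //; rewrite expr0 in h1; lra.
set t : R := 2 ^+ n in IH.
have t1 : 1 <= t by rewrite /t; apply: exprn_ege1; lra.
rewrite exprS -/t in h1.
case: (lerP 1 (10 * x * t)) => h3.
  by apply: IH.
have x0 : 0 < x by nra.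
have x01 : x < 1/10 by nra.
apply: (@ReachS x (39/10)).
- by apply/andP; split; lra.
- by rewrite lam_loE; apply/andP; split; lra.
apply: IH; last by rewrite /logistic; nra.
pose u := x * t.
have hu : 0 <= u by rewrite /u; nra.
have h39 : 0 <= 39 * (1 - x) - 20 by lra.
have hm := mulr_ge0 h39 hu.
have E : 10 * logistic (39/10) x * t = 39 * (1 - x) * u by rewrite /logistic /u; field.
rewrite E; rewrite /u in hm E *; nra.
Qed.

Lemma small_all (x : R) : 0 < x -> x <= 9/10 -> Reach x.
Proof.
move=> x0 x1.
have := @upper_nthrootP R (1 / (10 * x)) (Num.Def.archi_bound (1 / (10 * x))) (leqnn _).
set t := 2 ^+ _ => ht.
apply: (@small_n (Num.Def.archi_bound (1 / (10 * x)))) => //.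
have h10 : 0 < 10 * x by lra.
rewrite ltr_pdivrMr // in ht.
rewrite -/t; lra.
Qed.

Lemma reach_all (x : R) : 0 < x -> x < 1 -> Reach x.
Proof.
move=> x0 x1.
case: (lerP x (9/10)) => hx; first exact: small_all.
apply: (@ReachS x (39/10)).
- by apply/andP; split; lra.
- by rewrite lam_loE; apply/andP; split; lra.
apply: small_all; rewrite /logistic; nra.
Qed.
End Dyn.

Lemma good_of_reach (R : realType) (B : set R) (mB : measurable B) (mu : R) (mu0 : 0 < mu)
  (hmu : lebesgue_measure (B `&` A0) = mu%:E) (x : R) :
  @Reach R x -> exists k, (1 <= k)%N /\ exists2 r, 0 < r & Good B k x r.
Proof.
elim => [y hy | y l hy hl _ [k [hk [r r0 G]]]].
  have [r r0 G] := @good_base _ _ mB _ mu0 hmu _ hy.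
  by exists 1%N; split => //; exists r.
have [r' r'0 G'] := @good_step _ _ _ _ _ _ hy hl r0 G.
by exists k.+1; split => //; exists r'.
Qed.

Theorem mainTheorem3 (R : realType) :
  forall (x : R), S_space x ->
  forall (B : set R), measurable B -> B `<=` S_space -> (0 < phi B)%E ->
  exists n : nat, (1 <= n)%N /\ (0 < ptrans n x B)%E.
Proof.
move=> x Sx B mB BS hp.
have [mu mu0 hmu] := @phi_pos _ _ mB hp.
have : 0 < x < 1 by move: Sx; rewrite /S_space /= in_itv.
move=> /andP[x0 x1].
have [k [hk [r r0 [d d0 Hd]]]] := @good_of_reach _ _ mB _ mu0 hmu _ (@reach_all _ x x0 x1).
exists k; split => //.
apply: lt_le_trans (Hd x _ _); [by rewrite lte_fin | lra | lra].
Qed.
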